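(* Let $G=(V,E)$ be a finite, simple, connected graph with Bakry Emery curvature $K(x)\geq K>0$ at every vertex $x$, and assume $\operatorname{diam}_{\operatorname{eff}}(G)=\frac{\max_v\operatorname{Deg}(v)}{K}$. Then $G$ is a hypercube.
   Context: $d$ is the combinatorial distance, $\operatorname{Deg}$ the degree, $\operatorname{diam}_{\operatorname{eff}}(G)=\frac{1}{|V|^2}\sum_{x,y}d(x,y)$. Laplacian $\Delta f(x)=\sum_{y\sim x}(f(y)-f(x))$. Define $\Gamma_0(f,g)=fg$ and $2\Gamma_{i+1}(f,g)=\Delta\Gamma_i(f,g)-\Gamma_i(f,\Delta g)-\Gamma_i(\Delta f,g)$; write $\Gamma=\Gamma_1$, $\Gamma_i f=\Gamma_i(f,f)$. The Bakry Emery curvature at $x$ is $K(x)=\inf\{\Gamma_2 f(x): \Gamma f(x)=1\}$. Hypercube $Q_n$: binary strings of length $n$, adjacent iff differing in exactly one coordinate. *)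

(* Defs.v *)
From HB Require Import structures.
From mathcomp Require Import all_boot all_order all_algebra.
From mathcomp Require Import classical_sets reals ereal.
Set Implicit Arguments. Unset Strict Implicit. Unset Printing Implicit Defensive.
Import Order.TTheory GRing.Theory Num.Theory.
Local Open Scope ring_scope.
Local Open Scope classical_set_scope.

Definition simple_graph (V : finType) (adj : rel V) : Prop :=
  symmetric adj /\ irreflexive adj.

Definition connected_graph (V : finType) (adj : rel V) : Prop :=
  forall x y : V, connect adj x y.

Definition Deg (V : finType) (adj : rel V) (x : V) : nat := #|[set y | adj x y]|.
Definition maxDeg (V : finType) (adj : rel V) : nat := (\max_(v : V) Deg adj v)%N.

Definition walk_len (V : finType) (adj : rel V) (x y : V) (n : nat) : bool :=
  [exists p : n.-tuple V, path adj x p && (last x p == y)].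

(* Combinatorial distance: the least n such that a walk of length n from x
   to y exists (searched in 0..|V|-1, which suffices for connected graphs). *)
Definition dist (V : finType) (adj : rel V) (x y : V) : nat :=
  find (walk_len adj x y) (iota 0 #|V|).

Definition diam_eff (R : realType) (V : finType) (adj : rel V) : R :=
  (\sum_(x : V) \sum_(y : V) (dist adj x y)%:R) / (#|V|%:R ^+ 2).

Definition lap (R : realType) (V : finType) (adj : rel V) (f : V -> R) : V -> R :=
  fun x => \sum_(y | adj x y) (f y - f x).

Fixpoint Gam (R : realType) (V : finType) (adj : rel V) (i : nat)
  (f g : V -> R) : V -> R :=
  match i with
  | 0 => fun x => f x * g x
  | i'.+1 => fun x =>
      (lap adj (Gam adj i' f g) x - Gam adj i' f (lap adj g) x
       - Gam adj i' (lap adj f) g x) / 2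
  end.

(* Bakry-Emery curvature at x: inf { Gamma_2 f (x) : Gamma f (x) = 1 },
   as an extended real (inf of the empty set is +oo). *)
Definition BEcurv (R : realType) (V : finType) (adj : rel V) (x : V) : \bar R :=
  ereal_inf [set (Gam adj 2 f f x)%:E | f in [set f : V -> R | Gam adj 1 f f x = 1]].

Definition Qadj (n : nat) : rel {ffun 'I_n -> bool} :=
  fun u v => #|[set i | u i != v i]| == 1%N.

Definition is_hypercube (V : finType) (adj : rel V) : Prop :=
  exists n : nat, exists phi : V -> {ffun 'I_n -> bool},
    bijective phi /\ forall x y : V, adj x y = Qadj (phi x) (phi y).

(* Main.v *)
Require Import Defs.
From HB Require Import structures.
From mathcomp Require Import all_boot all_order all_algebra.
From mathcomp Require Import boolp classical_sets reals ereal.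
From mathcomp Require Import ring lra zify.
Import Order.TTheory GRing.Theory Num.Theory.
Set Implicit Arguments. Unset Strict Implicit. Unset Printing Implicit Defensive.
Local Open Scope ring_scope.
Section Dist.
Variables (V : finType) (adj : rel V).
Hypothesis adj_sym : symmetric adj.

Lemma walk_lenP x y n :
  reflect (exists p : seq V, [/\ size p = n, path adj x p & last x p = y])
          (walk_len adj x y n).
Proof.
apply: (iffP existsP).
  by case=> p /andP[hp /eqP hl]; exists (val p); rewrite size_tuple.
case=> p [hs hp hl]; have hs' : size p == n by rewrite hs.
by exists (Tuple hs'); rewrite /= hp hl eqxx.
Qed.

Lemma walk0 x y : walk_len adj x y 0 = (x == y).
Proof.
apply/walk_lenP/eqP => [[p [/size0nil -> _ <-]] //|<-].
by exists [::].
Qed.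

Lemma walk_step x y z n : walk_len adj x y n -> adj y z -> walk_len adj x z n.+1.
Proof.
move=> /walk_lenP[p [hs hp hl]] hyz; apply/walk_lenP; exists (rcons p z).
by rewrite size_rcons hs rcons_path hp hl hyz last_rcons.
Qed.

Lemma walk_rev x y n : walk_len adj x y n -> walk_len adj y x n.
Proof.
move=> /walk_lenP[p [hs hp hl]]; apply/walk_lenP.
exists (rev (belast x p)); split.
- by rewrite size_rev size_belast.
- rewrite -hl rev_path; apply: sub_path hp => a b; by rewrite adj_sym.
- case: p hs hp hl => [|a p] _ _ /=; first by move=> <-.
  move=> <-; rewrite rev_cons last_rcons //.
Qed.

Hypothesis conn : connected_graph adj.

Lemma walk_short x y : exists2 n, (n < #|V|)%N & walk_len adj x y n.
Proof.
have /connectP[p hp hl] := conn x y.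
rewrite hl; case: (shortenP hp) => p' hp' hu _.
exists (size p'); last by apply/walk_lenP; exists p'.
by have := card_uniqP hu; move=> /= <-; exact: max_card.
Qed.

Lemma dist_walk x y : walk_len adj x y (dist adj x y).
Proof.
have [n hn hw] := walk_short x y.
have hh : has (walk_len adj x y) (iota 0 #|V|).
  by apply/hasP; exists n => //; rewrite mem_iota.
have := nth_find 0 hh; rewrite nth_iota //; last by rewrite has_find size_iota in hh.
Qed.

Lemma dist_min x y n : walk_len adj x y n -> (dist adj x y <= n)%N.
Proof.
move=> hw; rewrite leqNgt; apply/negP => hlt.
have hn : (n < #|V|)%N.
  apply: (leq_trans hlt); rewrite /dist.
  by have := find_size (walk_len adj x y) (iota 0 #|V|); rewrite size_iota.
have := before_find 0 hlt; rewrite nth_iota // add0n hw //.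
Qed.

Lemma dist_lt x y : (dist adj x y < #|V|)%N.
Proof. by have [n hn /dist_min h] := walk_short x y; exact: leq_ltn_trans h hn. Qed.

Lemma dist_sym x y : dist adj x y = dist adj y x.
Proof.
by apply/eqP; rewrite eqn_leq !dist_min // walk_rev // dist_walk.
Qed.

Lemma dist0 x y : (dist adj x y == 0%N) = (x == y).
Proof.
apply/eqP/eqP => [h|<-]; first by have := dist_walk x y; rewrite h walk0 => /eqP.
by apply/eqP; rewrite -leqn0 dist_min // walk0.
Qed.

Lemma distxx x : dist adj x x = 0%N.
Proof. by apply/eqP; rewrite dist0. Qed.

Lemma dist_adj b y z : adj y z -> (dist adj b z <= (dist adj b y).+1)%N.
Proof. by move=> h; apply: dist_min; apply: walk_step h; apply: dist_walk. Qed.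

End Dist.
Section Gamma.
Variables (R : realType) (V : finType) (adj : rel V).

Lemma Gam1E (f g : V -> R) x :
  Gam adj 1 f g x = (\sum_(y | adj x y) (f y - f x) * (g y - g x)) / 2.
Proof.
rewrite /= /lap; congr (_ / 2).
rewrite mulr_sumr mulr_suml -!sumrB; apply: eq_bigr => y _; ring.
Qed.

Lemma Gam1C (f g : V -> R) x : Gam adj 1 f g x = Gam adj 1 g f x.
Proof. by rewrite !Gam1E; congr (_ / 2); apply: eq_bigr => y _; rewrite mulrC. Qed.

Lemma Gam2E (f : V -> R) x :
  Gam adj 2 f f x = lap adj (Gam adj 1 f f) x / 2 - Gam adj 1 f (lap adj f) x.
Proof.
have -> : Gam adj 2 f f x = (lap adj (Gam adj 1 f f) x - Gam adj 1 f (lap adj f) x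
   - Gam adj 1 (lap adj f) f x) / 2 by [].
rewrite (Gam1C (lap adj f)); by field.
Qed.

Lemma lap_ext (f g : V -> R) x : (forall y, f y = g y) -> lap adj f x = lap adj g x.
Proof. by move=> h; rewrite /lap; apply: eq_bigr => y _; rewrite !h. Qed.

Lemma lap_scale (c : R) (f : V -> R) x : lap adj (fun y => c * f y) x = c * lap adj f x.
Proof. by rewrite /lap mulr_sumr; apply: eq_bigr => y _; ring. Qed.

Lemma Gam1_scale (c : R) (f : V -> R) x :
  Gam adj 1 (fun y => c * f y) (fun y => c * f y) x = c ^+ 2 * Gam adj 1 f f x.
Proof.
rewrite !Gam1E mulrA; congr (_ / 2); rewrite mulr_sumr; apply: eq_bigr => y _; ring.
Qed.

Lemma Gam2_scale (c : R) (f : V -> R) x :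
  Gam adj 2 (fun y => c * f y) (fun y => c * f y) x = c ^+ 2 * Gam adj 2 f f x.
Proof.
rewrite !Gam2E (@lap_ext _ _ x (Gam1_scale c f)) lap_scale !Gam1E.
rewrite (eq_bigr (fun y => c ^+ 2 * ((f y - f x) * (lap adj f y - lap adj f x)))); last first.
  by move=> y _; rewrite !lap_scale; ring.
by rewrite -mulr_sumr; ring.
Qed.

Variable K : R.
Hypothesis hK : forall x : V, (K%:E <= BEcurv R adj x)%E.

Lemma curv (u : V -> R) x : 0 < Gam adj 1 u u x ->
  K * Gam adj 1 u u x <= Gam adj 2 u u x.
Proof.
move=> hpos; set s := Num.sqrt (Gam adj 1 u u x).
have hs : 0 < s by rewrite sqrtr_gt0.
have hs2 : s ^+ 2 = Gam adj 1 u u x by rewrite sqr_sqrtr // ltW.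
pose v := fun y => s^-1 * u y.
have hv1 : Gam adj 1 v v x = 1.
  by rewrite /v Gam1_scale exprVn hs2 mulVf // gt_eqF.
have hle : (K%:E <= (Gam adj 2 v v x)%:E)%E.
  apply: (le_trans (hK x)); apply: ereal_inf_lbound; by exists v.
rewrite lee_fin /v Gam2_scale exprVn hs2 in hle.
have hi : 0 < (Gam adj 1 u u x)^-1 by rewrite invr_gt0.
rewrite -(ler_pM2l hi) mulrA (mulrC _ K) -mulrA mulVf ?mulr1 //.
by rewrite gt_eqF.
Qed.

End Gamma.
Section Poisson.
Variables (R : realType) (V : finType) (adj : rel V).
Hypothesis adj_sym : symmetric adj.
Hypothesis conn : connected_graph adj.

Lemma propagate (P : pred V) :
  (forall x z, P x -> adj x z -> P z) -> forall x y, P x -> P y.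
Proof.
move=> h x y Px.
have cl : fingraph.closed adj P.
  move=> a b hab; apply/idP/idP => [Pa|Pb]; first exact: h hab.
  by apply: (h b); rewrite // adj_sym.
by have := closed_connect cl (conn x y); rewrite !unfold_in Px => <-.
Qed.

Lemma exists_max (F : V -> R) (x0 : V) : exists x, forall y, F y <= F x.
Proof.
case: (@arg_maxP _ _ V x0 predT F isT) => x _ h; exists x => y; exact: h.
Qed.

Lemma sum_lap (u : V -> R) : \sum_x lap adj u x = 0.
Proof.
rewrite /lap; under eq_bigr do rewrite sumrB.
rewrite sumrB; apply/eqP; rewrite subr_eq0; apply/eqP; rewrite (exchange_big_dep predT) //=.
apply: eq_bigr => x _; apply: eq_bigl => y; by rewrite adj_sym.
Qed.

Lemma lap0_const (u : V -> R) (x0 : V) :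
  (forall x, lap adj u x = 0) -> forall x y, u x = u y.
Proof.
move=> h0.
have [m hm] := exists_max u x0.
have key : forall y, u y = u m.
  move=> y0; apply/eqP; apply: (@propagate (fun y => u y == u m) _ m y0 (eqxx _)).
  move=> x z /eqP hx hxz.
  have := h0 x; rewrite /lap => hs.
  have h1 : forall w, adj x w -> 0 <= u x - u w by move=> w _; rewrite subr_ge0 hx hm.
  have h2 : \sum_(y | adj x y) (u x - u y) = 0.
    by rewrite -(eq_bigr _ (fun w _ => opprB (u w) (u x))) sumrN hs oppr0.
  have /eqP := @psumr_eq0P R V (adj x) (fun y => u x - u y) h1 h2 z hxz.
  by rewrite subr_eq0 hx eq_sym.
by move=> x y; rewrite !key.
Qed.


Definition Top (u : V -> R) x := lap adj u x - \sum_z u z.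

Lemma sum_Top (u : V -> R) : \sum_x Top u x = - (#|V|%:R * \sum_z u z).
Proof.
rewrite /Top sumrB sum_lap sub0r sumr_const.
by rewrite mulr_natl.
Qed.

Lemma Top_inj (u : V -> R) : (forall x, Top u x = 0) -> forall x, u x = 0.
Proof.
move=> h x.
have hn : (0 < #|V|)%N by apply/card_gt0P; exists x.
have hS : \sum_z u z = 0.
  have := sum_Top u; rewrite big1 // => /eqP; rewrite eq_sym oppr_eq0 mulf_eq0.
  by rewrite pnatr_eq0 eqn0Ngt hn /= => /eqP.
have hl : forall y, lap adj u y = 0 by move=> y; have := h y; rewrite /Top hS subr0.
have hc := lap0_const x hl.
have : \sum_z u z = #|V|%:R * u x.
  rewrite (eq_bigr (fun _ => u x)); last by move=> z _; rewrite (hc z x).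
  by rewrite sumr_const mulr_natl.
rewrite hS => /eqP; rewrite eq_sym mulf_eq0 pnatr_eq0 eqn0Ngt hn /= => /eqP //.
Qed.

Lemma Top_lin (I : finType) (c : I -> R) (F : I -> V -> R) x :
  \sum_i c i * Top (F i) x = Top (fun y => \sum_i c i * F i y) x.
Proof.
rewrite /Top /lap.
transitivity (\sum_i \sum_(z | adj x z) c i * (F i z - F i x)
              - \sum_i \sum_z c i * F i z).
  rewrite -sumrB; apply: eq_bigr => i _; by rewrite mulrBr !mulr_sumr.
congr (_ - _); last by rewrite exchange_big.
rewrite exchange_big; apply: eq_bigr => z _ /=.
rewrite -sumrB; apply: eq_bigr => i _; ring.
Qed.

Lemma lap_ext_Top (f g : V -> R) x : (forall y, f y = g y) -> Top f x = Top g x.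
Proof.
move=> h; rewrite /Top (lap_ext adj x h); congr (_ - _); apply: eq_bigr => y _; exact: h.
Qed.

Definition Amx : 'M[R]_#|V| :=
  \matrix_(i, j) Top (fun y => (y == enum_val i)%:R) (enum_val j).

Lemma mulAmx (v : 'rV[R]_#|V|) j :
  (v *m Amx) 0 j = Top (fun y => v 0 (enum_rank y)) (enum_val j).
Proof.
rewrite mxE (eq_bigr (fun i => v 0 i * Top (fun y => (y == enum_val i)%:R) (enum_val j))).
  rewrite Top_lin; apply: lap_ext_Top => y.
  rewrite (bigD1 (enum_rank y)) //= enum_rankK eqxx mulr1 big1 ?addr0 //.
  move=> i hi; case: eqP => [e|]; last by rewrite mulr0.
  by move: hi; rewrite e enum_valK eqxx.
by move=> i _; rewrite mxE.
Qed.

Lemma Amx_unit : Amx \in unitmx.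
Proof.
rewrite -row_free_unit -kermx_eq0; apply/eqP/row_matrixP => i; rewrite row0.
set r := row i (kermx Amx).
have hr : r *m Amx = 0 by rewrite /r -row_mul mulmx_ker row0.
apply/rowP => j; rewrite [RHS]mxE.
have := @Top_inj (fun y => r 0 (enum_rank y)) _ (enum_val j).
rewrite enum_valK => -> // x.
by rewrite -(enum_rankK x) -mulAmx hr mxE.
Qed.

Lemma poisson (g : V -> R) : \sum_x g x = 0 -> exists u, forall x, lap adj u x = g x.
Proof.
move=> hg.
pose w : 'rV[R]_#|V| := \row_j g (enum_val j).
pose v := w *m invmx Amx.
have hv : v *m Amx = w by rewrite /v mulmxKV // Amx_unit.
pose u := fun y => v 0 (enum_rank y).
have hT : forall x, Top u x = g x.
  by move=> x; have := mulAmx v (enum_rank x); rewrite hv mxE !enum_rankK => ->.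
have hS : \sum_z u z = 0.
  have := sum_Top u; rewrite (eq_bigr _ (fun x _ => hT x)) hg => /eqP.
  rewrite eq_sym oppr_eq0 mulf_eq0 pnatr_eq0 => /orP[/eqP h0|/eqP //].
  case: (pickP V) => [x _|h]; first by have := card0_eq h0 x.
  by rewrite big_pred0.
exists u => x; have := hT x; by rewrite /Top hS subr0.
Qed.

End Poisson.
Section Main.
Variables (R : realType) (V : finType) (adj : rel V) (K : R).
Hypothesis adj_sym : symmetric adj.
Hypothesis adj_irr : irreflexive adj.
Hypothesis conn : connected_graph adj.
Hypothesis Kpos : 0 < K.
Hypothesis hK : forall x : V, (K%:E <= BEcurv R adj x)%E.

Local Notation D := (maxDeg adj).
Local Notation G1 u := (Gam adj 1 u u).

Lemma Deg_le y : (Deg adj y <= D)%N.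
Proof. exact: (leq_bigmax (F := Deg adj) y). Qed.

Lemma sum_adj_const (c : R) y : \sum_(z | adj y z) c = c *+ Deg adj y.
Proof.
transitivity (\sum_(z in [pred z | adj y z]) c); first by apply: eq_bigl.
rewrite sumr_const; congr (_ *+ _); apply: eq_card => z; by rewrite !inE /= unfold_in /in_set /= asboolb.
Qed.

Lemma mul_self_ge0 (x : R) : 0 <= x * x.
Proof. by rewrite -expr2 sqr_ge0. Qed.

Lemma G1_ge0 (u : V -> R) y : 0 <= G1 u y.
Proof.
rewrite Gam1E divr_ge0 // sumr_ge0 // => z _; exact: mul_self_ge0.
Qed.

Lemma curv_all (u : V -> R) y : K * G1 u y <= Gam adj 2 u u y.
Proof.
have [hp|] := ltP 0 (G1 u y); first exact: curv.
move=> hle; have h0 : G1 u y = 0 by apply/eqP; rewrite eq_le hle G1_ge0.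
have ha : forall z, adj y z -> u z - u y = 0.
  move=> z hz; have : (\sum_(w | adj y w) (u w - u y) * (u w - u y)) = 0.
    by move: h0; rewrite Gam1E => /eqP; rewrite mulf_eq0 invr_eq0 pnatr_eq0 orbF => /eqP.
  move/(psumr_eq0P (fun w _ => mul_self_ge0 (u w - u y)))=> /(_ z hz) /eqP.
  by rewrite mulf_eq0 orbb => /eqP.
rewrite h0 mulr0 Gam2E Gam1E.
rewrite big1 ?mul0r ?subr0; last by move=> z hz; rewrite ha // mul0r.
rewrite /lap; apply: divr_ge0 => //; apply: sumr_ge0 => z _.
by rewrite h0 subr0 G1_ge0.
Qed.

Definition fd (b y : V) : R := (dist adj b y)%:R.

Lemma fd_sq b y z : adj y z -> (fd b z - fd b y) * (fd b z - fd b y) <= 1.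
Proof.
move=> h; have h1 := dist_adj conn b h.
have h2 := dist_adj conn b (y := z) (z := y); rewrite adj_sym in h2; have {h2} h2 := h2 h.
rewrite /fd; set p := dist adj b z in h1 h2 *; set q := dist adj b y in h1 h2 *.
have : (p = q.+1 \/ q = p.+1 \/ p = q)%N by lia.
case=> [->|[->|->]]; rewrite ?subrr ?mul0r //.
- rewrite -addn1 natrD; set t := (q%:R : R); have -> : t + 1 - t = 1 by ring.
  by rewrite mulr1.
- rewrite -addn1 natrD; set t := (p%:R : R); have -> : t - (t + 1) = -1 by ring.
  by rewrite mulrNN mulr1.
Qed.

Lemma local_ineq (b : V) (m : R) (u : V -> R) y :
  (forall x, lap adj u x = m - fd b x) ->
  (forall z, G1 u z <= G1 u y) ->
  (2 * K^+2 * G1 u y <= (D%:R : R)) /\ (2 * K^+2 * G1 u y = (D%:R : R) ->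
    [/\ lap adj (G1 u) y = 0, Deg adj y = D,
        forall z, adj y z -> K * (u z - u y) = fd b z - fd b y &
        forall z, adj y z -> (fd b z - fd b y) * (fd b z - fd b y) = 1]).
Proof.
move=> hu hmax.
set M := G1 u y.
set S2 := \sum_(z | adj y z) (u z - u y) * (u z - u y).
set Sc := \sum_(z | adj y z) (fd b z - fd b y) * (fd b z - fd b y).
set Sac := \sum_(z | adj y z) (u z - u y) * (fd b z - fd b y).
set L := lap adj (G1 u) y.
have hM : M = S2 / 2 by rewrite /M Gam1E.
have hG2 : Gam adj 2 u u y = L / 2 + Sac / 2.
  rewrite Gam2E Gam1E -/L; congr (_ + _); rewrite -mulNr; congr (_ / 2).
  rewrite /Sac -sumrN; apply: eq_bigr => z _; rewrite !hu; ring.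
have hcurv := curv_all u y; rewrite hG2 -/M in hcurv.
have hL : L <= 0 by rewrite /L /lap sumr_le0 // => z _; rewrite subr_le0 hmax.
have hsqE : \sum_(z | adj y z) (K * (u z - u y) - (fd b z - fd b y)) ^+ 2
            = K ^+ 2 * S2 - 2 * K * Sac + Sc.
  rewrite (eq_bigr (fun z => K ^+ 2 * ((u z - u y) * (u z - u y))
     - 2 * K * ((u z - u y) * (fd b z - fd b y))
     + (fd b z - fd b y) * (fd b z - fd b y))); last by move=> z _; ring.
  by rewrite big_split /= sumrB -!mulr_sumr.
have hsq0 : 0 <= K ^+ 2 * S2 - 2 * K * Sac + Sc.
  by rewrite -hsqE sumr_ge0 // => z _; rewrite sqr_ge0.
have hSc : Sc <= (Deg adj y)%:R.
  rewrite -[X in _ <= X]mulr1n -[X in _ <= X](sum_adj_const 1 y).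
  by apply: ler_sum => z hz; apply: fd_sq.
have hDeg : ((Deg adj y)%:R : R) <= D%:R by rewrite ler_nat Deg_le.

have e1 : K * L <= 0 by rewrite pmulr_rle0.
have e2 : K * (K * M) <= K * (L / 2 + Sac / 2) by rewrite ler_pM2l.
have e3 : K ^+ 2 * S2 = 2 * (K * (K * M)) by rewrite hM; field.
split; first by nra.
move=> hE.
have hKL : K * L = 0 by nra.
have hL0 : L = 0.
  by move/eqP: hKL; rewrite mulf_eq0 (gt_eqF Kpos) /= => /eqP.
have hScD : Sc = (Deg adj y)%:R by nra.
have hScD' : Sc = D%:R by nra.
have hsum0 : K ^+ 2 * S2 - 2 * K * Sac + Sc = 0 by nra.
split => //.
- by apply/eqP; rewrite -(eqr_nat R) -hScD -hScD'.
- move=> z hz; rewrite hsum0 in hsqE.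
  have := psumr_eq0P (fun w _ => sqr_ge0 (K * (u w - u y) - (fd b w - fd b y))) hsqE hz.
  by move/eqP; rewrite sqrf_eq0 subr_eq0 => /eqP.
- move=> z hz.
  have h0 : \sum_(w | adj y w) (1 - (fd b w - fd b y) * (fd b w - fd b y)) = 0.
    by rewrite sumrB sum_adj_const -/Sc hScD subrr.
  have hnn : forall w, adj y w -> 0 <= 1 - (fd b w - fd b y) * (fd b w - fd b y).
    by move=> w hw; rewrite subr_ge0 fd_sq.
  have := psumr_eq0P hnn h0 hz.
  by move/eqP; rewrite subr_eq0 eq_sym => /eqP.
Qed.

End Main.
Section Main2.
Variables (R : realType) (V : finType) (adj : rel V) (K : R).
Hypothesis adj_sym : symmetric adj.
Hypothesis adj_irr : irreflexive adj.
Hypothesis conn : connected_graph adj.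
Hypothesis Kpos : 0 < K.
Hypothesis hK : forall x : V, (K%:E <= BEcurv R adj x)%E.

Local Notation D := (maxDeg adj).
Local Notation G1 u := (Gam adj 1 u u).
Local Notation fd := (fd R adj).

Definition mean (b : V) : R := (\sum_y fd b y) / #|V|%:R.

Lemma analysis b : mean b <= D%:R / K /\
  (mean b = D%:R / K ->
   [/\ forall y, Deg adj y = D,
       forall y z, adj y z -> (fd b z - fd b y) * (fd b z - fd b y) = 1 &
       forall y, lap adj (fd b) y = D%:R - K * fd b y]).
Proof.
set m := mean b.
have hn : (0 < #|V|)%N by apply/card_gt0P; exists b.
have hnR : (#|V|%:R : R) != 0 by rewrite pnatr_eq0 -lt0n.
have hg : \sum_y (m - fd b y) = 0.
  by rewrite sumrB sumr_const /m /mean -(mulr_natr (_ / _)) divfK // subrr.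
have [u hu] := poisson adj_sym conn hg.
have [y1 hy1] := exists_max (fun y => G1 u y) b.
have [hi hii] := local_ineq adj_sym conn Kpos hK hu hy1.
set M := G1 u y1 in hi hii hy1.
have hfb : fd b b = 0 by rewrite /fd distxx.
have hub : lap adj u b = m by rewrite hu hfb subr0.
set S2 := \sum_(z | adj b z) (u z - u b) * (u z - u b).
set Sa := \sum_(z | adj b z) (u z - u b).
have hS2 : S2 <= 2 * M.
  have := hy1 b; rewrite Gam1E -/S2 => h; lra.
have hsq : 0 <= K ^+ 2 * S2 - 2 * K * Sa + (Deg adj b)%:R.
  have -> : K ^+ 2 * S2 - 2 * K * Sa + (Deg adj b)%:R =
     \sum_(z | adj b z) (K * (u z - u b) - 1) ^+ 2.
    rewrite (eq_bigr (fun z => K ^+ 2 * ((u z - u b) * (u z - u b))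
       - 2 * K * (u z - u b) + 1)); last by move=> z _; ring.
    by rewrite big_split /= sumrB -!mulr_sumr sum_adj_const.
  by apply: sumr_ge0 => z _; rewrite sqr_ge0.
have hSa : Sa = m by rewrite -hub.
have hDeg : ((Deg adj b)%:R : R) <= D%:R by rewrite ler_nat Deg_le.
have hK2 : 0 <= K ^+ 2 by rewrite sqr_ge0.
have hmK : K * m <= D%:R by nra.
split; first by rewrite ler_pdivlMr // mulrC.
move=> hmD.
have hKm : K * m = D%:R by rewrite hmD; field; rewrite gt_eqF.
have hE : 2 * K ^+ 2 * M = D%:R by nra.
have hall : forall y, G1 u y = M.
  move=> y; apply/eqP; apply: (@propagate V adj adj_sym conn (fun w => G1 u w == M) _ y1 y) => //.
  move=> x z /eqP hx hxz.
  have hmx : forall w, G1 u w <= G1 u x by move=> w; rewrite hx hy1.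
  have [_ hii'] := local_ineq adj_sym conn Kpos hK hu hmx.
  have hE' : 2 * K ^+ 2 * G1 u x = D%:R by rewrite hx.
  have [hL _ _ _] := hii' hE'.
  have hnp : forall w, adj x w -> 0 <= G1 u x - G1 u w.
    by move=> w _; rewrite subr_ge0.
  have h0 : \sum_(w | adj x w) (G1 u x - G1 u w) = 0.
    rewrite (eq_bigr (fun w => - (G1 u w - G1 u x))); last by move=> w _; rewrite opprB.
    by rewrite sumrN; move: hL; rewrite /lap => ->; rewrite oppr0.
  have := psumr_eq0P hnp h0 hxz; move/eqP; rewrite subr_eq0 hx eq_sym //.
have hloc : forall y, [/\ lap adj (G1 u) y = 0, Deg adj y = D,
        forall z, adj y z -> K * (u z - u y) = fd b z - fd b y &
        forall z, adj y z -> (fd b z - fd b y) * (fd b z - fd b y) = 1].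
  move=> y.
  have hmx : forall w, G1 u w <= G1 u y by move=> w; rewrite !hall.
  have [_ hii'] := local_ineq adj_sym conn Kpos hK hu hmx.
  apply: hii'; rewrite hall; lra.
split.
- by move=> y; have [] := hloc y.
- by move=> y z; have [_ _ _ h4] := hloc y; exact: h4.
- move=> y; have [_ _ h3 _] := hloc y.
  rewrite /lap (eq_bigr (fun z => K * (u z - u y))); last by move=> z hz; rewrite h3.
  rewrite -mulr_sumr -/(lap adj u y) hu mulrBr hKm //.
Qed.

End Main2.
Section Comb.
Variables (R : realType) (V : finType) (adj : rel V).
Hypothesis adj_sym : symmetric adj.
Hypothesis adj_irr : irreflexive adj.
Hypothesis conn : connected_graph adj.
Variable D : nat.
Hypothesis hDeg : forall y, Deg adj y = D.
Hypothesis hpar : forall b y z, adj y z ->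
  (dist adj b z = (dist adj b y).+1) \/ (dist adj b y = (dist adj b z).+1).
Hypothesis hlap : forall b y, lap adj (fd R adj b) y = D%:R - 2 * fd R adj b y.

Local Notation d := (dist adj).
Local Notation fd := (fd R adj).

Lemma DegE y : Deg adj y = #|[pred z | adj y z]|.
Proof. by apply: eq_card => z; rewrite !inE /= unfold_in /in_set /= asboolb. Qed.

Lemma sum_cond_card (I : finType) (P Q : pred I) :
  (\sum_(z | P z) (Q z : nat) = #|[pred z | P z && Q z]|)%N.
Proof.
rewrite -sum1_card big_mkcondr /=; apply: eq_bigr => z _; by case: (Q z).
Qed.

Lemma dn_count b y : #|[pred z | adj y z && (d b z < d b y)%N]| = d b y.
Proof.
have h := hlap b y; rewrite /lap in h.
rewrite (eq_bigr (fun z => 1 - 2 * ((d b z < d b y)%N : nat)%:R)) in h; last first.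
  move=> z hz; rewrite /fd.
  case: (hpar b hz) => ->.
    by rewrite ltnNge leqnSn /= -addn1 natrD; ring.
  by rewrite ltnSn /= -addn1 natrD; ring.
rewrite sumrB -mulr_sumr -natr_sum sum_cond_card sum_adj_const hDeg in h.
have : (#|[pred z | adj y z && (d b z < d b y)%N]|%:R : R) = (d b y)%:R.
  move: h; rewrite /fd; lra.
by move/eqP; rewrite eqr_nat => /eqP.
Qed.

Variable x0 : V.
Let N0 := [pred z | adj x0 z].
Let n := #|N0|.
Definition ee (i : 'I_n) : V := @enum_val V N0 i.

Lemma ee_adj i : adj x0 (ee i).
Proof. by have := @enum_valP V N0 i. Qed.

Lemma ee_inj : injective ee.
Proof. exact: enum_val_inj. Qed.

Lemma ee_surj z : adj x0 z -> exists i, ee i = z.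
Proof.
move=> hz; have hz' : z \in N0 by [].
by exists (enum_rank_in hz' z); rewrite /ee enum_rankK_in.
Qed.

Lemma card_ee (P : pred V) :
  #|[pred i : 'I_n | P (ee i)]| = #|[pred z | adj x0 z && P z]|.
Proof.
rewrite -(card_image ee_inj); apply: eq_card => z.
apply/fintype.imageP/idP => [[i hi ->]|]; first by rewrite inE /= ee_adj.
rewrite inE /= => /andP[hz hP]; have [i hi] := ee_surj hz.
by exists i; rewrite // inE /= hi.
Qed.

Definition phi (y : V) : {ffun 'I_n -> bool} := [ffun i => (d (ee i) y < d x0 y)%N].

Lemma phi_card y : #|[pred i | phi y i]| = d x0 y.
Proof.
have -> : #|[pred i | phi y i]| = #|[pred i : 'I_n | (d y (ee i) < d y x0)%N]|.
  by apply: eq_card => i; rewrite !inE /= ffunE !(dist_sym adj_sym conn y).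
rewrite (card_ee (fun z => d y z < d y x0)%N) /=.
by rewrite dn_count (dist_sym adj_sym conn).
Qed.

Lemma sum_ge1_eq (I : finType) (P : pred I) (c : I -> nat) :
  (forall i, P i -> 0 < c i)%N -> (\sum_(i | P i) c i = \sum_(i | P i) 1)%N ->
  forall i, P i -> c i = 1%N.
Proof.
move=> hpos hs i hi.
have e : (\sum_(i | P i) c i = \sum_(i | P i) (c i - 1) + \sum_(i | P i) 1)%N.
  by rewrite -big_split /=; apply: eq_bigr => j hj; rewrite subnK // hpos.
rewrite hs -{1}[X in X = _]add0n in e; move/addIn: e => /esym/eqP.
rewrite sum_nat_eq0 => /forallP /(_ i); rewrite hi /= subn_eq0 => h.
by apply/eqP; rewrite eqn_leq h hpos.
Qed.

Lemma phi_neq y z : adj y z -> phi y != phi z.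
Proof.
move=> h; apply/eqP => e.
have : #|[pred i | phi y i]| = #|[pred i | phi z i]| by rewrite e.
rewrite !phi_card; case: (hpar x0 h) => ->; lia.
Qed.

Lemma hval y i : (d x0 y = (d (ee i) y).+1) \/ (d (ee i) y = (d x0 y).+1).
Proof.
have := hpar y (ee_adj i); rewrite !(dist_sym adj_sym conn y); tauto.
Qed.

Lemma flip_count y i : #|[pred z | adj y z && (phi z i != phi y i)]| = 1%N.
Proof.
pose h w : R := fd x0 w - fd (ee i) w.
have hw : forall w, h w = if phi w i then 1 else -1.
  move=> w; rewrite /h /fd ffunE; case: (hval w i) => ->.
    by rewrite ltnSn -addn1 natrD; ring.
  by rewrite ltnNge leqnSn /= -addn1 natrD; ring.
have hl1 : lap adj h y = -2 * h y.
  rewrite /lap (eq_bigr (fun z => (fd x0 z - fd x0 y) - (fd (ee i) z - fd (ee i) y))).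
    by rewrite sumrB -!/(lap adj _ y) !hlap /h; ring.
  by move=> z _; rewrite /h; ring.
have hl2 : lap adj h y =
   \sum_(z | adj y z) ((phi z i != phi y i) : nat)%:R * (-2 * h y).
  apply: eq_bigr => z _; rewrite !hw; case: (phi z i); case: (phi y i) => /=; ring.
rewrite -mulr_suml -natr_sum sum_cond_card hl1 in hl2.
have hy0 : -2 * h y != 0 by rewrite hw; case: (phi y i); rewrite ?mulr1 ?mulrN1 ?oppr_eq0 //.
have : (#|[pred z | adj y z && (phi z i != phi y i)]|%:R : R) = 1%:R.
  apply: (mulIf hy0); rewrite mul1r -hl2 //.
by move/eqP; rewrite eqr_nat => /eqP.
Qed.

Lemma hn : n = D.
Proof. by rewrite /n -(hDeg x0) DegE. Qed.

Lemma card_sum (I : finType) (Q : pred I) : #|[pred i | Q i]| = (\sum_i (Q i : nat))%N.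
Proof. by rewrite -sum1_card big_mkcond /=; apply: eq_bigr => i _; rewrite inE; case: (Q i). Qed.

Lemma nbr_one y z : adj y z -> #|[pred i | phi y i != phi z i]| = 1%N.
Proof.
move=> hyz.
have hs : (\sum_(w | adj y w) #|[pred i | phi y i != phi w i]| = \sum_(w | adj y w) 1)%N.
  rewrite sum1_card -DegE hDeg -hn.
  under eq_bigr do rewrite card_sum.
  rewrite exchange_big /=.
  rewrite -[X in _ = X]card_ord -sum1_card; apply: eq_bigr => i _.
  rewrite sum_cond_card -(flip_count y i); apply: eq_card => w; rewrite !inE /= eq_sym //.
apply: (sum_ge1_eq _ hs) => // w hw.
have hne := phi_neq hw.
case: (pickP [pred i | phi y i != phi w i]) => [i hi|h0]; first by apply/card_gt0P; exists i.
exfalso; move/negP: hne; apply; apply/eqP/ffunP => i.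
by have := h0 i; rewrite /= => /negbFE/eqP.
Qed.

Definition fl (w : {ffun 'I_n -> bool}) i : {ffun 'I_n -> bool} :=
  [ffun j => if j == i then ~~ w j else w j].

Lemma flip_card w i :
  (#|[pred j | fl w i j]| + w i = #|[pred j | w j]| + ~~ w i)%N.
Proof.
rewrite !card_sum (bigD1 i) //= [X in _ = X + _](bigD1 i) //= ffunE eqxx.
rewrite (eq_bigr (fun j => (w j : nat))); last first.
  by move=> j hj; rewrite ffunE (negbTE hj).
case: (w i) => /=; lia.
Qed.

Lemma flipped y z i : adj y z -> phi y i != phi z i ->
  phi z = [ffun j => if j == i then ~~ phi y j else phi y j].
Proof.
move=> hyz hi; have h1 := nbr_one hyz.
have /card1P[k hk] : #|[pred i | phi y i != phi z i]| == 1%N by rewrite h1.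
have ki : i = k by have := hk i; rewrite !inE /= hi => /esym/eqP.
apply/ffunP => j; rewrite [X in _ = X]ffunE; have [->|hj] := eqVneq j i.
  by move: hi; case: (phi y i); case: (phi z i).
have := hk j; rewrite !inE /= -ki (negbTE hj) /=.
by case: (phi y j); case: (phi z j).
Qed.

Lemma flip_exists y i : exists z, adj y z && (phi z i != phi y i).
Proof.
have := flip_count y i => h.
have : (0 < #|[pred z | adj y z && (phi z i != phi y i)]|)%N by rewrite h.
by case/card_gt0P => z hz; exists z.
Qed.

Lemma flip_uniq y i z z' : adj y z -> phi z i != phi y i -> adj y z' -> phi z' i != phi y i ->
  z = z'.
Proof.
move=> h1 h2 h3 h4; have h5 := flip_count y i.
have /card1P[k hk] : #|[pred z | adj y z && (phi z i != phi y i)]| == 1%N by rewrite h5.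
have := hk z; have := hk z'; rewrite !inE /= h1 h2 h3 h4 => /esym/eqP -> /esym/eqP -> //.
Qed.

Lemma phi_x0 : phi x0 = [ffun=> false].
Proof. by apply/ffunP => i; rewrite !ffunE distxx. Qed.

Lemma phi_inj : injective phi.
Proof.
suff : forall k y y', d x0 y = k -> phi y = phi y' -> y = y'.
  by move=> h y y'; apply: h.
elim=> [|k IH] y y' hk e.
  have hk' : d x0 y' = 0%N by rewrite -phi_card -e phi_card.
  by move/eqP: hk; move/eqP: hk'; rewrite !dist0 // => /eqP <- /eqP <-.
have hk' : d x0 y' = k.+1 by rewrite -phi_card -e phi_card.
have : (0 < #|[pred i | phi y i]|)%N by rewrite phi_card hk.
case/card_gt0P => i; rewrite inE /= => hyi.
have [z /andP[hyz hzi]] := flip_exists y i.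
have [z' /andP[hyz' hzi']] := flip_exists y' i.
have hzi2 : phi y i != phi z i by rewrite eq_sym.
have hzi2' : phi y' i != phi z' i by rewrite eq_sym.
have ez : phi z = phi z'.
  by rewrite (flipped hyz hzi2) (flipped hyz' hzi2') e.
have hz : d x0 z = k.
  case: (hpar x0 hyz) => hh; last by move: hh; rewrite hk => -[].
  exfalso; have := phi_card z; rewrite (flipped hyz hzi2) hh hk.
  have := flip_card (phi y) i; rewrite hyi phi_card hk /fl; lia.
have zz := IH z z' hz ez.
subst z'.
by apply: (flip_uniq (y := z) (i := i)); rewrite 1?adj_sym.
Qed.




Lemma QadjE m (u v : {ffun 'I_m -> bool}) : Qadj u v = (#|[pred i | u i != v i]| == 1%N).
Proof.
rewrite /Qadj; congr (_ == _); apply: eq_card => i.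
by rewrite !inE /= unfold_in /in_set /= asboolb.
Qed.

Lemma flflK w i : fl (fl w i) i = w.
Proof. by apply/ffunP => j; rewrite !ffunE; case: eqP => // ->; rewrite negbK. Qed.

Lemma adj_phi y z : adj y z = Qadj (phi y) (phi z).
Proof.
rewrite QadjE; apply/idP/idP => [h|]; first by rewrite nbr_one.
move/card1P=> [k hk].
have hzk : phi z = fl (phi y) k.
  apply/ffunP => j; rewrite [X in _ = X]ffunE; have := hk j; rewrite !inE /=.
  have [->|hjk] := eqVneq j k; first by case: (phi y k); case: (phi z k).
  by case: (phi y j); case: (phi z j).
have [w /andP[hyw hwk]] := flip_exists y k.
have hwk' : phi y k != phi w k by rewrite eq_sym.
have := flipped hyw hwk'; rewrite -/(fl (phi y) k) -hzk => /phi_inj <- //.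
Qed.

Lemma phi_surj w : exists y, phi y = w.
Proof.
suff : forall k (w : {ffun 'I_n -> bool}), #|[pred j | w j]| = k -> exists y, phi y = w.
  by move=> h; exact: h.
elim=> [|k IH] {}w hw.
  exists x0; rewrite phi_x0; apply/ffunP => j; rewrite ffunE.
  by have := card0_eq hw j; rewrite inE /= => ->.
have : (0 < #|[pred j | w j]|)%N by rewrite hw.
case/card_gt0P => i; rewrite inE /= => hwi.
have hc := flip_card w i; rewrite hwi hw /= in hc.
have hc' : #|[pred j | fl w i j]| = k.
  by move: hc; rewrite addn1 addn0 => -[].
have [y' hy'] := IH (fl w i) hc'.
have [z /andP[hyz hzi]] := flip_exists y' i.
have hzi' : phi y' i != phi z i by rewrite eq_sym.
by exists z; rewrite (flipped hyz hzi') -/(fl (phi y') i) hy' flflK.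
Qed.

Lemma phi_bij : bijective phi.
Proof.
pose g w := odflt x0 [pick y | phi y == w].
have hg : forall w, phi (g w) = w.
  move=> w; rewrite /g; case: pickP => [y /eqP //|h].
  by have [y hy] := phi_surj w; have := h y; rewrite hy eqxx.
exists g => [y|w]; last exact: hg.
by apply: phi_inj; rewrite hg.
Qed.

End Comb.

Unset Implicit Arguments.

Theorem theoremA2 (R : realType) (V : finType) (adj : rel V) (K : R) :
  (0 < #|V|)%N ->
  simple_graph adj ->
  connected_graph adj ->
  0 < K ->
  (forall x : V, (K%:E <= BEcurv R adj x)%E) ->
  diam_eff R adj = (maxDeg adj)%:R / K ->
  is_hypercube adj.
Proof.
move=> hV [hsym hirr] hconn hKp hK hdiam.
have [x0 _] := card_gt0P hV.
set D := maxDeg adj in hdiam.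
have hnR : (#|V|%:R : R) != 0 by rewrite pnatr_eq0 -lt0n.
have hmean : forall b, mean R adj b = D%:R / K.
  have hsum : \sum_b mean R adj b = #|V|%:R * (D%:R / K).
    rewrite -hdiam /diam_eff /mean -mulr_suml.
    field; exact: hnR.
  have hle : forall b, 0 <= D%:R / K - mean R adj b.
    by move=> b; have [h _] := analysis hsym hconn hKp hK b; rewrite subr_ge0.
  have h0 : \sum_b (D%:R / K - mean R adj b) = 0.
    rewrite sumrB hsum sumr_const -(mulr_natl (_ / _)); apply/eqP; rewrite subr_eq0; apply/eqP; reflexivity.
  move=> b; have := @psumr_eq0P _ _ _ _ (fun b _ => hle b) h0 b isT.
  by move/eqP; rewrite subr_eq0 => /eqP.
have hcons := fun b => (analysis hsym hconn hKp hK b).2 (hmean b).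
have hDeg : forall y, Deg adj y = D by move=> y; have [h _ _] := hcons x0.
have hpar : forall b y z, adj y z ->
    (dist adj b z = (dist adj b y).+1) \/ (dist adj b y = (dist adj b z).+1).
  move=> b y z hyz; have [_ h _] := hcons b; have := h y z hyz.
  have h1 := dist_adj hconn b hyz.
  have h2 := dist_adj hconn b (y := z) (z := y); rewrite hsym in h2; have {}h2 := h2 hyz.
  rewrite /fd; case: (ltngtP (dist adj b z) (dist adj b y)) => [hl|hl|->]; last first.
  - by rewrite subrr mul0r => /eqP; rewrite eq_sym oner_eq0.
  - by move=> _; left; apply/eqP; rewrite eqn_leq h1 hl.
  - by move=> _; right; apply/eqP; rewrite eqn_leq h2 hl.
have hK2 : (0 < D)%N -> K = 2.
  move=> hD0.
  have : (0 < #|[pred z | adj x0 z]|)%N by rewrite -DegE hDeg.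
  case/card_gt0P => y0; rewrite inE /= => hxy.
  have hd1 : dist adj x0 y0 = 1%N.
    have := dist_adj hconn x0 hxy; rewrite distxx //.
    have : dist adj x0 y0 != 0%N.
      by rewrite dist0 //; apply/eqP => e; move: hxy; rewrite e hirr.
    lia.
  have [_ _ h3] := hcons x0; have := h3 y0.
  rewrite /lap (eq_bigr (fun z => 1 - 2 * ((z == x0) : nat)%:R)); last first.
    move=> z hz; rewrite /fd hd1.
    have [->|hzx] := eqVneq z x0; first by rewrite (distxx hconn) /=; ring.
    case: (hpar x0 y0 z hz) => [->|]; first by rewrite hd1 /=; ring.
    by rewrite hd1 => -[] /esym /eqP; rewrite dist0 // eq_sym (negbTE hzx).
  rewrite sumrB -mulr_sumr -natr_sum sum_cond_card sum_adj_const hDeg.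
  have -> : #|[pred z | adj y0 z && (z == x0)]| = 1%N.
    apply: (@eq_card1 _ x0) => z; rewrite !inE /=.
    case: eqP => [->|]; rewrite ?andbF ?andbT ?eqxx; first by rewrite hsym.
    by [].
  rewrite /fd hd1 => h; lra.
have hlap2 : forall b y, lap adj (fd R adj b) y = D%:R - 2 * fd R adj b y.
  move=> b y; have [_ _ h3] := hcons b; rewrite h3 -/D.
  case: (posnP D) => [hD0|hDp]; last by rewrite hK2.
  have hnoadj : forall z, adj y z = false.
    move=> z; apply/negP => hz.
    have : (0 < #|[pred z | adj y z]|)%N by apply/card_gt0P; exists z.
    by rewrite -DegE hDeg; move: hD0; rewrite /D => ->.
  have hl0 : lap adj (fd R adj b) y = 0.
    by rewrite /lap big_pred0 // => z; rewrite hnoadj.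
  have hf0 : fd R adj b y = 0.
    have := h3 y; rewrite hl0 -/D hD0 sub0r => /eqP; rewrite eq_sym oppr_eq0 mulf_eq0.
    by rewrite (gt_eqF hKp) => /eqP.
  by rewrite hf0 hD0 !mulr0.
exists #|[pred z | adj x0 z]|, (phi adj x0); split.
  exact: (phi_bij hsym hconn hDeg hpar hlap2).
by move=> x y; exact: (adj_phi hsym hconn hDeg hpar hlap2).
Qed.
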